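(* Fix $\alpha\in(1/2,1)$. Then for every $n\ge 0$ and every rooted tree $T$ on $n$ nodes, the tree $U_n$ defined below contains a subgraph isomorphic to a subdivision of $T$. Equivalently, there is an injective map $f$ from the nodes of $T$ to the nodes of $U_n$ with $f(\mathsf{NCA}(u,v))=\mathsf{NCA}(f(u),f(v))$ for all $u,v$. Definition of $a_N$: for integers $N\ge0$, $a_0$ is the empty sequence, $a_1=(1)$, and for $N\ge 2$, $a_N=a_{\lfloor N/2\rfloor}\oplus(N)\oplus a_{\lfloor N/2\rfloor}$, where $\oplus$ denotes concatenation. Definition of $U_n$: $U_0$ is the empty tree and $U_1$ is a single node. For $n\ge2$, let $N=\lfloor(1-\alpha)n\rfloor$ and $a_N=(a(1),\dots,a(k))$. Then $U_n$ consists of a path $u_1-\dots-u_{k+1}$ rooted at $u_1$, with the following subtrees attached: - for each $i=1,\dots,k$, a copy of $U_{a(i)-1}$ and, for every integer $j\ge 2$, a copy of $U_{\lfloor a(i)/j\rfloor}$, all attached to $u_i$; - a copy of $U_{\lfloor\alpha n\rfloor}$ and, for every integer $j\ge2$, a copy of $U_{\lfloor (n-1)/j\rfloor}$, all attached to $u_{k+1}$. Attaching a copy of a tree to a node means making its root a child of that node; copies of the empty tree add nothing.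
   Context: Trees are rooted and unordered, with edges directed from parent to child. The degree of a node is its number of children. $\mathsf{NCA}$ denotes the nearest common ancestor. *)

(* Defs.v *)
From mathcomp Require Import all_boot all_order all_algebra.
From mathcomp Require Import reals.
Set Implicit Arguments. Unset Strict Implicit. Unset Printing Implicit Defensive.
Import Order.TTheory GRing.Theory Num.Theory.

(* Rooted trees; the order of children is irrelevant for everything below. *)
Inductive tree := Node of seq tree.

Definition children (t : tree) : seq tree := let: Node cs := t in cs.

Fixpoint tsize (t : tree) : nat :=
  let: Node cs := t in (sumn (map tsize cs)).+1.

Definition otree := option tree.
Definition osize (t : otree) : nat := if t is Some t' then tsize t' else 0.

(* Nodes of a tree are addressed by paths from the root (sequences of child
   indices); [valid t p] says that p addresses a node of t. *)
Fixpoint valid (t : tree) (p : seq nat) : bool :=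
  if p is i :: p' then (i < size (children t))%N && valid (nth (Node [::]) (children t) i) p'
  else true.

Definition is_node (t : otree) (p : seq nat) : bool :=
  if t is Some t' then valid t' p else false.

(* Nearest common ancestor = longest common prefix of the addresses. *)
Fixpoint nca (p q : seq nat) : seq nat :=
  match p, q with
  | i :: p', j :: q' => if i == j then i :: nca p' q' else [::]
  | _, _ => [::]
  end.

Definition nca_embeds (T U : otree) : Prop :=
  exists f : seq nat -> seq nat,
    [/\ forall u, is_node T u -> is_node U (f u),
        {in is_node T &, injective f}
      & forall u v, is_node T u -> is_node T v -> f (nca u v) = nca (f u) (f v)].

(* The sequence a_N (fuel-based; fuel N suffices). *)
Fixpoint aseq_f (fuel N : nat) : seq nat :=
  match fuel with
  | 0 => if N == 1%N then [:: 1%N] else [::]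
  | fuel'.+1 =>
    if (N < 2)%N then (if N == 1%N then [:: 1%N] else [::])
    else aseq_f fuel' N./2 ++ N :: aseq_f fuel' N./2
  end.
Definition aseq (N : nat) : seq nat := aseq_f N N.

Definition somes (ts : seq otree) : seq tree := pmap id ts.

(* U_n, fuel-based: every recursive call is on a strictly smaller index when
   1/2 < alpha < 1, so fuel n.+1 suffices. *)
Fixpoint U_f {R : realType} (alpha : R) (fuel n : nat) : otree :=
  match fuel with
  | 0 => None
  | fuel'.+1 =>
    if n is 0 then None else
    if n is 1 then Some (Node [::]) else
    let rec := U_f alpha fuel' in
    let N := Num.truncn ((1 - alpha) * n%:R) in
    (* subtrees attached at the node carrying value ai: U_{ai-1}, U_{floor(ai/j)} for j>=2
       (for j > ai these are empty) *)
    let att ai := somes (rec ai.-1 :: [seq rec (ai %/ j)%N | j <- iota 2 ai.-1]) in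
    let last := Node (somes (rec (Num.truncn (alpha * n%:R))
                       :: [seq rec (n.-1 %/ j)%N | j <- iota 2 n])) in
    Some (foldr (fun ai sub => Node (sub :: att ai)) last (aseq N))
  end.

Definition U {R : realType} (alpha : R) (n : nat) : otree := U_f alpha n.+1 n.

(* Main.v *)
Require Import Defs.
From mathcomp Require Import all_boot all_order all_algebra.
From mathcomp Require Import reals.
From mathcomp Require Import lra zify.
Import Order.TTheory GRing.Theory Num.Theory.
Set Implicit Arguments. Unset Strict Implicit. Unset Printing Implicit Defensive.
Local Notation tsize := Defs.tsize.
Lemma real_facts (R : realType) (alpha : R) (n : nat) :
  (2^-1 < alpha)%R -> (alpha < 1)%R -> (0 < n)%N ->
  [/\ (Num.truncn (alpha * n%:R) < n)%N,
      (Num.truncn ((1 - alpha) * n%:R) <= n)%N &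
      (n <= Num.truncn (alpha * n%:R) + Num.truncn ((1 - alpha) * n%:R) + 1)%N].
Proof.
move=> ha1 ha2 hn.
have hn' : (0 < n%:R :> R)%R by rewrite ltr0n.
have h2 : (0 < (2:R)^-1)%R by rewrite invr_gt0.
split.
- rewrite truncn_lt_nat; last by apply: mulr_ge0 => //; lra.
  nra.
- rewrite truncn_le_nat. rewrite -natr1. nra.
- have A := truncnS_gt (alpha * n%:R).
  have B := truncnS_gt ((1 - alpha) * n%:R).
  suff : (n < (Num.truncn (alpha * n%:R)).+1 + (Num.truncn ((1 - alpha) * n%:R)).+1)%N by lia.
  rewrite -(ltr_nat R) natrD.
  lra.
Qed.
Definition emb (t : tree) (o : otree) := nca_embeds (Some t) o.

Lemma emb_some t o : emb t o -> exists u, o = Some u.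
Proof.
case: o => [u|]; first by exists u.
by case=> f [/(_ [::]) /= H _ _]; have := H isT.
Qed.

Lemma nca_cons c a b : nca (c :: a) (c :: b) = c :: nca a b.
Proof. by rewrite /= eqxx. Qed.

Lemma emb_down t u c : c < size (children u) ->
  emb t (Some (nth (Node [::]) (children u) c)) -> emb t (Some u).
Proof.
move=> hc [f [hv hi hn]].
exists (fun p => c :: f p); split.
- by move=> p /hv /= ->; rewrite hc.
- by move=> p q hp hq [] /hi; apply.
- by move=> p q hp hq; rewrite hn // nca_cons.
Qed.

Lemma finite_choice (A : Type) (x0 : A) (n : nat) (P : nat -> A -> Prop) :
  (forall j, j < n -> exists x, P j x) -> exists F : nat -> A, forall j, j < n -> P j (F j).
Proof.
elim: n => [|n IH] H; first by exists (fun _ => x0).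
have [F HF] : exists F : nat -> A, forall j, j < n -> P j (F j).
  by apply: IH => j hj; apply: H; apply: ltn_trans hj _.
have [x Hx] := H n (ltnSn n).
exists (fun j => if j == n then x else F j) => j hj.
case: eqP => [->//|/eqP hne]; apply: HF; lia.
Qed.

Lemma emb_node cs us (sigma : nat -> nat) :
 (forall j j', j < size cs -> j' < size cs -> sigma j = sigma j' -> j = j') ->
 (forall j, j < size cs -> sigma j < size us /\
     emb (nth (Node [::]) cs j) (Some (nth (Node [::]) us (sigma j)))) ->
 emb (Node cs) (Some (Node us)).
Proof.
move=> hinj H.
have [F HF] := @finite_choice _ id (size cs) (fun j (f : seq nat -> seq nat) =>
   sigma j < size us /\
   [/\ forall u, is_node (Some (nth (Node [::]) cs j)) u ->
         is_node (Some (nth (Node [::]) us (sigma j))) (f u),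
       {in is_node (Some (nth (Node [::]) cs j)) &, injective f}
     & forall u v, is_node (Some (nth (Node [::]) cs j)) u ->
         is_node (Some (nth (Node [::]) cs j)) v -> f (nca u v) = nca (f u) (f v)])
  ltac:(by move=> j /H [h1 [f hf]]; exists f).
exists (fun p => if p is j :: q then sigma j :: F j q else [::]); split.
- case=> [//|j q] /= /andP [hj hq].
  have [h1 [h2 _ _]] := HF j hj.
  by rewrite /= h1 /=; apply: h2.
- move=> [|j p] [|j' p'] //= /andP [hj hp] /andP [hj' hp'] [] e1.
  have ejj := hinj _ _ hj hj' e1; subst j'.
  have [_ [_ h3 _]] := HF j hj.
  by move=> e2; rewrite (h3 _ _ hp hp' e2).
- move=> [|j p] [|j' p'] //= /andP [hj hp] /andP [hj' hp'].
  case: (eqVneq j j') => [e|hne]; first subst j'.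
  + have [_ [_ _ h4]] := HF j hj.
    by rewrite eqxx (h4 _ _ hp hp').
  + have -> : (sigma j == sigma j') = false.
      by apply/eqP => e; move: hne; rewrite (hinj _ _ hj hj' e) eqxx.
    done.
Qed.

Lemma somes_nth (ots : seq otree) k u : nth None ots k = Some u ->
  size (somes (take k ots)) < size (somes ots) /\
  nth (Node [::]) (somes ots) (size (somes (take k ots))) = u.
Proof.
move=> hk.
have hks : k < size ots by case: ltnP => // h; move: hk; rewrite nth_default.
rewrite -{2 3}(cat_take_drop k ots) (drop_nth None hks) hk /somes pmap_cat /=.
by rewrite size_cat nth_cat ltnn subnn /=; split => //; lia.
Qed.

Lemma somes_take_lt (ots : seq otree) k k' u : k < k' -> nth None ots k = Some u ->
  size (somes (take k ots)) < size (somes (take k' ots)).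
Proof.
move=> hkk hk.
have hks : k < size ots by case: ltnP => // h; move: hk; rewrite nth_default.
have [d ->] : exists d, k' = k + d.+1 by exists (k' - k).-1; lia.
rewrite takeD (drop_nth None hks) hk /= /somes pmap_cat size_cat /=.
lia.
Qed.

Lemma emb_somes cs (ots : seq otree) (tau : nat -> nat) :
 (forall j j', j < size cs -> j' < size cs -> tau j = tau j' -> j = j') ->
 (forall j, j < size cs -> emb (nth (Node [::]) cs j) (nth None ots (tau j))) ->
 emb (Node cs) (Some (Node (somes ots))).
Proof.
move=> hinj H.
have HS : forall j, j < size cs -> exists u, nth None ots (tau j) = Some u.
  by move=> j /H /emb_some.
apply: (@emb_node _ _ (fun j => size (somes (take (tau j) ots)))).
- move=> j j' hj hj' e.
  have [u hu] := HS _ hj; have [u' hu'] := HS _ hj'.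
  case: (ltngtP (tau j) (tau j')) => [lt|gt|eq]; last exact: hinj.
  + by have := somes_take_lt lt hu; rewrite e ltnn.
  + by have := somes_take_lt gt hu'; rewrite e ltnn.
- move=> j hj; have [u hu] := HS _ hj.
  have [h1 h2] := somes_nth hu.
  split => //; rewrite h2 -hu; exact: H.
Qed.
Lemma rank_exists (r : nat) (c : nat -> nat) (P : pred nat) :
  exists rho : nat -> nat,
   (forall j j', j < r -> j' < r -> P j -> P j' -> rho j = rho j' -> j = j') /\
   (forall j, j < r -> P j -> (rho j).+1 * c j <= \sum_(0 <= k < r | P k) c k).
Proof.
pose bef k j := (c j < c k) || ((c k == c j) && (k < j)).
have befP : forall k j, bef k j = true <-> (c j < c k \/ (c k = c j /\ k < j)).
  move=> k j; rewrite /bef; split.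
  - by case/orP => [->|/andP [/eqP -> ->]]; [left|right].
  - by case=> [->//|[-> ->]]; rewrite eqxx orbT.
have bef_trans : forall a b d, bef a b -> bef b d -> bef a d.
  move=> a b d /befP h1 /befP h2; apply/befP; lia.
have bef_irr : forall a, bef a a = false.
  by move=> a; apply/negbTE/negP => /befP; lia.
have bef_tot : forall a b, a != b -> bef a b || bef b a.
  move=> a b /eqP hab; case h1: (bef a b) => //=; apply/befP.
  have : ~ (c b < c a \/ (c a = c b /\ a < b)) by move/befP; rewrite h1.
  lia.
pose A j := fun k => P k && bef k j.
pose rho j := count (A j) (iota 0 r).
have cnt1 : forall j, j < r -> P j -> count (predU (A j) (pred1 j)) (iota 0 r) = (rho j).+1.
  move=> j hj hP.
  have := count_predUI (A j) (pred1 j) (iota 0 r).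
  have -> : count (predI (A j) (pred1 j)) (iota 0 r) = 0.
    apply/eqP; rewrite eqn0Ngt -has_count; apply/hasPn => k _; apply/negP.
    by move=> /andP [/andP [_ hb] /eqP ek]; move: hb; rewrite ek bef_irr.
  have -> : count (pred1 j) (iota 0 r) = 1.
    by rewrite (count_uniq_mem _ (iota_uniq 0 r)) mem_iota /= add0n hj.
  rewrite /rho; lia.
exists rho; split.
- move=> j j' hj hj' hP hP' e; apply/eqP; apply/negPn/negP => hne.
  wlog hb : j j' hj hj' hP hP' e hne / bef j j'.
    move=> W; case/orP: (bef_tot _ _ hne) => hb; first exact: (W j j').
    by apply: (W j' j) => //; rewrite eq_sym.
  have : (rho j).+1 <= rho j'.
    rewrite -cnt1 //; apply: sub_count => k /orP [/andP [hPk hbk]|/eqP ->].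
    + by rewrite /A hPk (bef_trans _ _ _ hbk hb).
    + by rewrite /A hP hb.
  by rewrite e ltnn.
- move=> j hj hP.
  rewrite /index_iota subn0 (bigID (fun k => bef k j || (k == j))) /=.
  apply: leq_trans (leq_addr _ _).
  apply: (@leq_trans (\sum_(i <- iota 0 r | P i && (bef i j || (i == j))) c j)).
    rewrite big_const_seq iter_addn_0 mulnC -cnt1 //.
    apply: eq_leq; congr (_ * _); apply: eq_count => k; rewrite /A /=; case: (eqVneq k j) => [->|_]; by rewrite ?hP ?bef_irr ?orbT ?orbF ?andbT.
  apply: leq_sum => k /andP [_ /orP [/befP|/eqP ->]]; lia.
Qed.
Inductive dom : seq nat -> seq nat -> Prop :=
| dom_nil xs : dom [::] xs
| dom_skip s a xs : dom s xs -> dom s (a :: xs)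
| dom_take x s a xs : x <= a -> dom s xs -> dom (x :: s) (a :: xs).

Lemma dom_catr s xs ys : dom s xs -> dom s (xs ++ ys).
Proof. elim=> * /=; by constructor. Qed.

Lemma dom_catl s xs ys : dom s ys -> dom s (xs ++ ys).
Proof. elim: xs => //= a xs IH h; constructor; exact: IH. Qed.

Lemma dom_cat s1 s2 xs ys : dom s1 xs -> dom s2 ys -> dom (s1 ++ s2) (xs ++ ys).
Proof.
move=> h; elim: h ys s2 => /=.
- by move=> xs0 ys s2 h; apply: dom_catl.
- by move=> s a xs0 _ IH ys s2 h; constructor; apply: IH.
- by move=> x s a xs0 hx _ IH ys s2 h; constructor => //; apply: IH.
Qed.

Lemma split_seq K s : K < sumn s ->
  exists s1 x s2, [/\ s = s1 ++ x :: s2, sumn s1 <= K & K < sumn s1 + x].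
Proof.
elim: s K => [|y s IH] K //= h.
case: (ltnP K y) => hy.
- by exists [::], y, s.
- have [s1 [x [s2 [e h1 h2]]]] := IH (K - y) ltac:(lia).
  exists (y :: s1), x, s2; rewrite e /=; split => //; lia.
Qed.

Lemma aseq_le f N x : x \in aseq_f f N -> x <= N.
Proof.
elim: f N => [|f IH] N /=.
- by case: eqP => [->|]; rewrite ?inE // => /eqP ->.
- case: ltnP => h.
  + by case: eqP => [->|]; rewrite ?inE // => /eqP ->.
  + have hh : N./2 <= N by rewrite -divn2 leq_div.
    rewrite mem_cat inE => /orP [/IH|/orP [/eqP->//|/IH]] hx; exact: leq_trans hx hh.
Qed.

Lemma aseq_dom N : forall f, N <= f -> forall s, all (fun x => 0 < x) s ->
  sumn s <= N -> dom s (aseq_f f N).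
Proof.
elim/ltn_ind: N => N IHN [|f] hf s hpos hsum.
- have -> : s = [::] by case: s hpos hsum => //= x s; lia.
  constructor.
- rewrite /=; case: ltnP => hN.
  + case: s hpos hsum => [|x s] /=; first by constructor.
    case: s => [|y s] /=.
    * move=> hx hs; have -> : N = 1 by lia.
      have -> : x = 1 by lia.
      by constructor; constructor.
    * lia.
  + have hh : N./2 < N by rewrite -divn2 ltn_Pdiv //; lia.
    have hf' : N./2 <= f by lia.
    case: (leqP (sumn s) N./2) => hs.
    * by apply: dom_catr; apply: IHN.
    * have [s1 [x [s2 [e h1 h2]]]] := split_seq hs.
      move: hpos hsum; rewrite e all_cat sumn_cat /= => /andP [p1 /andP [px p2]] hsum.
      apply: dom_cat; first exact: IHN.
      constructor; first lia.
      apply: IHN => //.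
      have : N./2 + N./2 <= N by rewrite addnn -divn2 -muln2 leq_trunc_div.
      lia.
Qed.
Lemma tsize_pos T : 0 < tsize T. Proof. by case: T. Qed.

Lemma tsizeE cs : tsize (Node cs) = (sumn (map tsize cs)).+1.
Proof. by []. Qed.

Lemma sum_nth_tsize cs :
  \sum_(0 <= k < size cs) tsize (nth (Node [::]) cs k) = sumn (map tsize cs).
Proof.
apply/esym; rewrite sumnE (big_nth 0) size_map /index_iota subn0 !big_seq.
by apply: eq_bigr => k; rewrite mem_iota /= add0n => hk; rewrite (nth_map (Node [::])).
Qed.

Lemma sum_nth_tsize_but cs i : i < size cs ->
  \sum_(0 <= k < size cs | k != i) tsize (nth (Node [::]) cs k) =
  sumn (map tsize cs) - tsize (nth (Node [::]) cs i).
Proof.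
move=> hi; rewrite -sum_nth_tsize /index_iota subn0.
rewrite (bigD1_seq i) ?mem_iota ?iota_uniq //=; lia.
Qed.

Lemma tsize_child_le cs i : i < size cs ->
  tsize (nth (Node [::]) cs i) <= sumn (map tsize cs).
Proof.
elim: cs i => [|c cs IH] [|i] //= hi; first by lia.
have := IH i hi; lia.
Qed.

Inductive HP (K : nat) : tree -> seq nat -> Prop :=
| HP0 cs : all (fun c => tsize c <= K) cs -> HP K (Node cs) [::]
| HP1 cs i s : i < size cs -> K < tsize (nth (Node [::]) cs i) ->
   HP K (nth (Node [::]) cs i) s ->
   HP K (Node cs) ((tsize (Node cs) - tsize (nth (Node [::]) cs i)) :: s).

Lemma HP_exists K T : exists s, HP K T s.
Proof.
have : forall n T, tsize T <= n -> exists s, HP K T s; last by apply; exact: leqnn.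
elim=> [|n IH] [cs] hT; first by have := tsize_pos (Node cs); lia.
case hh: (has (fun c => K < tsize c) cs).
- have hi := hh; rewrite has_find in hi.
  have hK := nth_find (Node [::]) hh.
  have [s hs] := IH (nth (Node [::]) cs (find (fun c => K < tsize c) cs))
                   ltac:(have := tsize_child_le hi; rewrite tsizeE in hT; lia).
  by eexists; apply: HP1; eauto.
- exists [::]; apply: HP0; move: hh; clear.
  by elim: cs => //= c cs IHc; case: ltnP => //= hc /IHc ->; rewrite andbT.
Qed.

Lemma HP_props K T s : HP K T s ->
  all (fun x => 0 < x) s /\ (s = [::] \/ sumn s + K < tsize T).
Proof.
elim=> [cs _|cs i s0 hi hK _ [IH1 IH2]]; first by split => //; left.
have hc := tsize_child_le hi.
split; first by rewrite /= IH1 andbT; lia.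
right; rewrite /=; case: IH2 => [->|h] /=; lia.
Qed.
Lemma last_emb (n K : nat) (rec : nat -> otree)
  (hIH : forall m, m < n -> forall T, tsize T <= m -> emb T (rec m)) (hK : K < n)
  cs : all (fun c => tsize c <= K) cs -> tsize (Node cs) <= n ->
  emb (Node cs) (Some (Node (somes (rec K :: [seq rec (n.-1 %/ j) | j <- iota 2 n])))).
Proof.
move=> hall hT.
have [rho [hinj hb]] := rank_exists (size cs) (fun k => tsize (nth (Node [::]) cs k)) predT.
apply: (@emb_somes _ _ rho).
- by move=> j j' hj hj' e; apply: hinj.
- move=> j hj.
  have hbj := hb j hj isT.
  rewrite (eq_bigl xpredT) // sum_nth_tsize in hbj.
  move/(all_nthP (Node [::])): hall => hall.
  have hcK := hall j hj.
  have hc1 := tsize_pos (nth (Node [::]) cs j).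
  rewrite tsizeE in hT.
  case e: (rho j) => [|m].
  + by apply: hIH hK _ hcK.
  + rewrite e in hbj.
    have hm : m.+2 <= n.-1.
      apply: leq_trans _ (leq_trans hbj _); first by rewrite leq_pmulr.
      lia.
    rewrite /= (nth_map 0); last by rewrite size_iota; lia.
    rewrite nth_iota; last by lia.
    apply: hIH.
    * apply: leq_ltn_trans (leq_div _ _) _; lia.
    * rewrite leq_divRL // mulnC; apply: leq_trans _ (leq_trans hbj _); [by rewrite -add2n | lia].
Qed.

Lemma path_emb (n K : nat) (rec : nat -> otree)
  (hIH : forall m, m < n -> forall T, tsize T <= m -> emb T (rec m)) (hK : K < n) :
  forall s xs, dom s xs -> forall T, all (fun a => a <= n) xs -> HP K T s -> tsize T <= n ->
  emb T (Some (foldr (fun ai sub => Node (sub :: somes (rec ai.-1 :: [seq rec (ai %/ j) | j <- iota 2 ai.-1])))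
     (Node (somes (rec K :: [seq rec (n.-1 %/ j) | j <- iota 2 n]))) xs)).
Proof.
move=> s xs; elim.
- move=> xs0 T hall hHP hT; inversion hHP; subst.
  elim: xs0 hall => [|a xs0 IHx] /= hall.
  + exact: last_emb.
  + apply: (@emb_down _ _ 0) => //; apply: IHx; by case/andP: hall.
- move=> s0 a xs0 _ IH T /= /andP [_ hall] hHP hT.
  apply: (@emb_down _ _ 0) => //; exact: IH.
- move=> x s0 a xs0 hx _ IH T hall0 hHP hT; case/andP: hall0 => ha hall.
  inversion hHP as [|cs i s1 hi hKi hHPi e1 e2]; subst.
  rewrite (_ : forall (F : nat -> tree -> tree) z l, foldr F z (a :: l) = F a (foldr F z l)) //; cbv beta.
  set P := foldr _ _ xs0.
  set ots := (rec a.-1 :: _).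
  change (emb (Node cs) (Some (Node (somes (Some P :: ots))))).
  set ci := nth (Node [::]) cs i in hKi hHPi hx hT.
  have hci := tsize_child_le hi.
  rewrite tsizeE in hx hT.
  have [rho [hinj hb]] := rank_exists (size cs) (fun k => tsize (nth (Node [::]) cs k)) (fun k => k != i).
  apply: (@emb_somes _ _ (fun j => if j == i then 0 else (rho j).+1)).
  - move=> j j' hj hj'.
    case: (eqVneq j i) => [->|hji]; case: (eqVneq j' i) => [->|hj'i] //.
    by move=> [] e; apply: hinj.
  - move=> j hj.
    case: (eqVneq j i) => [->|hji].
    + rewrite /=; apply: IH => //; rewrite /ci; lia.
    + have hbj := hb j hj hji.
      rewrite sum_nth_tsize_but // -/ci in hbj.
      have hc1 := tsize_pos (nth (Node [::]) cs j).
      rewrite /ots.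
      case e: (rho j) => [|m].
      * rewrite /=; apply: hIH; first by lia.
        rewrite e in hbj; lia.
      * rewrite e in hbj.
        have hm : m.+2 <= a.-1.
          apply: leq_trans _ (leq_trans hbj _); first by rewrite leq_pmulr.
          lia.
        rewrite /= (nth_map 0); last by rewrite size_iota; lia.
        rewrite nth_iota; last by lia.
        apply: hIH.
        -- apply: leq_trans (ltn_Pdiv _ _) _; lia.
        -- rewrite leq_divRL // mulnC; apply: leq_trans _ (leq_trans hbj _); [by rewrite -add2n | lia].
Qed.

Lemma main_emb (R : realType) (alpha : R) : (2^-1 < alpha)%R -> (alpha < 1)%R ->
  forall f n, n < f -> forall T, tsize T <= n -> emb T (U_f alpha f n).
Proof.
move=> ha1 ha2; elim=> [|f IH] n // hn T hT.
case: n hn hT => [|[|n]] hn hT.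
- by have := tsize_pos T; lia.
- case: T hT => cs hT.
  have -> : cs = [::].
    case: cs hT => [|c cs'] // hT; have := tsize_pos c; rewrite /= in hT; lia.
  by apply: (@emb_node [::] [::] id).
- have [hK hN hKN] := real_facts (n := n.+2) ha1 ha2 isT.
  set K := Num.truncn (alpha * n.+2%:R) in hK hKN.
  set N := Num.truncn ((1 - alpha) * n.+2%:R) in hN hKN.
  have [s hs] := HP_exists K T.
  have [hpos hsum] := HP_props hs.
  have hsN : sumn s <= N by case: hsum => [->//|]; lia.
  have hdom := aseq_dom (leqnn N) hpos hsN.
  have hallA : all (fun a => a <= n.+2) (aseq N).
    by apply/allP => a /aseq_le; lia.
  have hIH' : forall k, k < n.+2 -> forall T, tsize T <= k -> emb T (U_f alpha f k).
    by move=> k hk; apply: IH; lia.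
  exact: (path_emb hIH' hK hdom hallA hs hT).
Qed.

Unset Implicit Arguments.

Theorem lemma3 (R : realType) (alpha : R) :
  (2^-1 < alpha)%R -> (alpha < 1)%R ->
  forall (n : nat) (T : otree), osize T = n -> nca_embeds T (U alpha n).
Proof.
move=> ha1 ha2 n [t|] hT.
- apply: (main_emb ha1 ha2 (ltnSn n)); rewrite -hT; exact: leqnn.
- by exists id; split => // u.
Qed.
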